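(* Let $n \ge r \ge r^* \ge 1$ be integers, let $A_1,\dots,A_m \in \mathbb{R}^{n\times n}$ be symmetric matrices, and define the linear map $\mathcal{A}:\mathbb{R}^{n\times n}\to\mathbb{R}^m$ by $\mathcal{A}(M) = (\langle A_1,M\rangle,\dots,\langle A_m,M\rangle)^\top$, where $\langle A,B\rangle=\operatorname{tr}(A^\top B)$. Let $M^*\in\mathbb{R}^{n\times n}$ be a nonzero symmetric positive semidefinite matrix of rank $r^*$, let $b=\mathcal{A}(M^* )$, and consider \[ f(X) = \tfrac12\|\mathcal{A}(XX^\top)-b\|_2^2,\qquad X\in\mathbb{R}^{n\times r}. \] Assume $\mathcal{A}$ satisfies the RIP$_{r+r^*}$ property with constant $\delta\in[0,1)$. Let $\hat X\in\mathbb{R}^{n\times r}$ be a first-order critical point of $f$, i.e. $\nabla f(\hat X)=0$. If \[ \|\hat X\hat X^\top - M^*\|_F^2 > 2\,\frac{1+\delta}{1-\delta}\,\operatorname{tr}(M^* )\,\sigma_r(\hat X)^2, \] then $\hat X$ is not a second-order critical point of $f$; it is a strict saddle point, and the Hessian $\nabla^2 f(\hat X)$ has a strictly negative eigenvalue not larger than \[ 2(1+\delta)\sigma_r(\hat X)^2 - \frac{(1-\delta)\,\|\hat X\hat X^\top - M^*\|_F^2}{\operatorname{tr}(M^* )}. \]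
   Context: RIP: for a natural number $p$, $\mathcal{A}$ satisfies $\delta_p$-RIP (RIP$_p$ with constant $\delta$) if $(1-\delta)\|M\|_F^2 \le \|\mathcal{A}(M)\|_2^2 \le (1+\delta)\|M\|_F^2$ for all $M\in\mathbb{R}^{n\times n}$ with $\operatorname{rank}(M)\le p$. $\sigma_r(\hat X)$ denotes the $r$-th largest singular value of $\hat X$. The Hessian $\nabla^2 f(X)$ is regarded as the symmetric quadratic form $U\mapsto \nabla^2 f(X)[U,U]=\sum \frac{\partial^2 f}{\partial X_{ij}\partial X_{kl}}(X)U_{ij}U_{kl}$ on $\mathbb{R}^{n\times r}$ (with the Frobenius inner product), and its eigenvalues are those of this form. A second-order critical point is a point with zero gradient and positive semidefinite Hessian; a strict saddle is a first-order critical point whose Hessian has a strictly negative eigenvalue. *)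

(* Defs.v *)
From HB Require Import structures.
From mathcomp Require Import all_boot all_order all_algebra.
From mathcomp Require Import all_classical all_reals all_analysis.
From Stdlib Require Import ClassicalEpsilon.
Set Implicit Arguments. Unset Strict Implicit. Unset Printing Implicit Defensive.
Import Order.TTheory GRing.Theory Num.Theory.
Local Open Scope ring_scope.

Section Defs.
Variable R : realType.

Definition frob_inner (p q : nat) (A B : 'M[R]_(p, q)) : R := \tr (A^T *m B).
Definition frob_norm2 (p q : nat) (A : 'M[R]_(p, q)) : R := frob_inner A A.

Definition norm2sq (m : nat) (v : 'cV[R]_m) : R := \sum_(i < m) (v i 0) ^+ 2.

Definition meas_op (m n : nat) (As : 'I_m -> 'M[R]_n) (M : 'M[R]_n) : 'cV[R]_m :=
  \col_i frob_inner (As i) M.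

Definition RIP (m n : nat) (As : 'I_m -> 'M[R]_n) (p : nat) (delta : R) : Prop :=
  forall M : 'M[R]_n, (\rank M <= p)%N ->
    (1 - delta) * frob_norm2 M <= norm2sq (meas_op As M) /\
    norm2sq (meas_op As M) <= (1 + delta) * frob_norm2 M.

Definition sym_matrix (n : nat) (M : 'M[R]_n) : Prop := M^T = M.

Definition psd (n : nat) (M : 'M[R]_n) : Prop :=
  sym_matrix M /\ forall v : 'cV[R]_n, 0 <= (v^T *m M *m v) 0 0.

Definition fobj (m n r : nat) (As : 'I_m -> 'M[R]_n) (b : 'cV[R]_m)
  (X : 'M[R]_(n, r)) : R :=
  2^-1 * norm2sq (meas_op As (X *m X^T) - b).

Definition first_order_critical (n r : nat) (f : 'M[R]_(n, r) -> R)
  (X : 'M[R]_(n, r)) : Prop :=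
  forall U : 'M[R]_(n, r), is_derive (0 : R) (1 : R) (fun t : R => f (X + t *: U)) 0.

(* Hessian as the sym_matrix bilinear form
   (U,V) |-> sum d^2 f / dX_ij dX_kl U_ij V_kl = d/ds d/dt f(X + sU + tV) at 0. *)
Definition hessian (n r : nat) (f : 'M[R]_(n, r) -> R) (X U V : 'M[R]_(n, r)) : R :=
  derive1 (fun s : R => derive1 (fun t : R => f (X + s *: U + t *: V)) 0) 0.

Definition hessian_eigenvalue (n r : nat) (f : 'M[R]_(n, r) -> R)
  (X : 'M[R]_(n, r)) (lam : R) : Prop :=
  exists2 U : 'M[R]_(n, r), U != 0 &
    forall V : 'M[R]_(n, r), hessian f X U V = lam * frob_inner U V.

Definition second_order_critical (n r : nat) (f : 'M[R]_(n, r) -> R)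
  (X : 'M[R]_(n, r)) : Prop :=
  first_order_critical f X /\ forall U, 0 <= hessian f X U U.

Definition strict_saddle (n r : nat) (f : 'M[R]_(n, r) -> R)
  (X : 'M[R]_(n, r)) : Prop :=
  first_order_critical f X /\ exists lam, hessian_eigenvalue f X lam /\ lam < 0.

Definition sorted_spectrum (k : nat) (A : 'M[R]_k) (s : seq R) : Prop :=
  sorted (fun x y : R => y <= x) s /\ char_poly A = \prod_(x <- s) ('X - x%:P).

Lemma seqR_inhabited : inhabited (seq R). Proof. exact: (inhabits [::]). Qed.

Definition sing_vals_sq (n r : nat) (X : 'M[R]_(n, r)) : seq R :=
  epsilon seqR_inhabited (sorted_spectrum (X^T *m X)).

(* k-th largest singular value sigma_k(X), k >= 1 *)
Definition sing_val (n r : nat) (k : nat) (X : 'M[R]_(n, r)) : R :=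
  Num.sqrt (nth 0 (sing_vals_sq X) k.-1).

End Defs.

(* Main.v *)
Require Import Defs.
From HB Require Import structures.
From mathcomp Require Import all_boot all_order all_algebra.
From mathcomp Require Import all_classical all_reals all_analysis.
From mathcomp Require Import complex spectral sesquilinear ring lra.
From Stdlib Require Import ClassicalEpsilon.
Set Implicit Arguments. Unset Strict Implicit. Unset Printing Implicit Defensive.
Import Order.TTheory GRing.Theory Num.Theory.
Local Open Scope ring_scope.

Section A.
Variable R : realFieldType.

Lemma lin_sum (V : lmodType R) (h : V -> R)
  (hlin : forall x y c, h (x + c *: y) = h x + c * h y) I (rr : seq I) (c : I -> R) (F : I -> V) :
  h (\sum_(i <- rr) c i *: F i) = \sum_(i <- rr) c i * h (F i).
Proof.
have h0 : h 0 = 0.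
  have := hlin 0 0 1; rewrite scale1r addr0 mul1r => E.
  by apply: (@addrI _ (h 0)); rewrite addr0 -E.
elim/big_rec2: _ => // i y1 y2 _ <-.
by rewrite addrC hlin addrC.
Qed.

Lemma cnormE n (z : 'cV[R]_n) : (z^T *m z) 0 0 = \sum_i z i 0 ^+ 2.
Proof. by rewrite mxE; apply: eq_bigr => i _; rewrite mxE expr2. Qed.

Lemma cnorm_ge0 n (z : 'cV[R]_n) : 0 <= (z^T *m z) 0 0.
Proof. by rewrite cnormE; apply: sumr_ge0 => i _; exact: sqr_ge0. Qed.

Lemma cnorm_eq0 n (z : 'cV[R]_n) : (z^T *m z) 0 0 = 0 -> z = 0.
Proof.
rewrite cnormE => /eqP; rewrite psumr_eq0; last by move=> i _; exact: sqr_ge0.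
move=> /allP H; apply/matrixP => i j; rewrite ord1 mxE.
by have := H i (mem_index_enum i); rewrite sqrf_eq0 => /eqP.
Qed.

Lemma cnorm_gt0 n (z : 'cV[R]_n) : z != 0 -> 0 < (z^T *m z) 0 0.
Proof.
move=> znz; rewrite lt_def cnorm_ge0 andbT; apply: contra znz => /eqP H.
by rewrite (cnorm_eq0 H).
Qed.

Lemma rnormE n (w : 'rV[R]_n) : (w *m w^T) 0 0 = ((w^T)^T *m w^T) 0 0.
Proof. by rewrite trmxK. Qed.

Lemma rnorm_ge0 n (w : 'rV[R]_n) : 0 <= (w *m w^T) 0 0.
Proof. by rewrite rnormE cnorm_ge0. Qed.

Lemma rnorm_gt0 n (w : 'rV[R]_n) : w != 0 -> 0 < (w *m w^T) 0 0.
Proof.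
move=> wnz; rewrite rnormE cnorm_gt0 //; apply: contra wnz => /eqP H.
by rewrite -[w]trmxK H linear0.
Qed.

Lemma tr11 (A : 'M[R]_1) : \tr A = A 0 0.
Proof. by rewrite /mxtrace big_ord1. Qed.

End A.

Lemma char_poly_conj (F : comNzRingType) N (Q P A : 'M[F]_N) : Q *m P = 1%:M ->
  char_poly (Q *m A *m P) = char_poly A.
Proof.
move=> QP; rewrite /char_poly /char_poly_mx.
have -> : 'X%:M - map_mx polyC (Q *m A *m P) =
    map_mx polyC Q *m ('X%:M - map_mx polyC A) *m map_mx polyC P.
  rewrite mulmxBr mulmxBl mul_mx_scalar -scalemxAl -map_mxM.
  have E1 : forall g : {rmorphism F -> {poly F}}, map_mx g (Q *m P) = 1%:M by move=> g; rewrite QP map_mx1.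
  have E2 : forall g : {rmorphism F -> {poly F}}, map_mx g (Q *m A *m P) = map_mx g Q *m map_mx g A *m map_mx g P by move=> g; rewrite !map_mxM.
  by rewrite E1 scalemx1 E2.
have E1 : forall g : {rmorphism F -> {poly F}}, map_mx g Q *m map_mx g P = 1%:M.
  by move=> g; rewrite -map_mxM QP map_mx1.
by rewrite !det_mulmx mulrAC -det_mulmx E1 det1 mul1r.
Qed.

Section Spec.
Variable R : rcfType.
Local Notation C := (R[i]).
Local Notation Re := (@complex.Re R).
Local Notation Im := (@complex.Im R).

Lemma ReD (x y : C) : Re (x + y) = Re x + Re y.
Proof. by case: x => a b; case: y. Qed.
Lemma ImD (x y : C) : Im (x + y) = Im x + Im y.
Proof. by case: x => a b; case: y. Qed.

Lemma Re_sum I (r : seq I) (Pr : pred I) (F : I -> C) :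
  Re (\sum_(i <- r | Pr i) F i) = \sum_(i <- r | Pr i) Re (F i).
Proof. by elim/big_rec2: _ => // i y1 y2 _ <-; rewrite ReD. Qed.
Lemma Im_sum I (r : seq I) (Pr : pred I) (F : I -> C) :
  Im (\sum_(i <- r | Pr i) F i) = \sum_(i <- r | Pr i) Im (F i).
Proof. by elim/big_rec2: _ => // i y1 y2 _ <-; rewrite ImD. Qed.

Lemma ReM_conj (x y : C) (r : R) :
  Re ((x^*)%R * (r%:C)%C * y) = r * (Re x * Re y + Im x * Im y).
Proof. case: x => a b; case: y => c e /=. ring. Qed.

Lemma ReMr (x : C) (r : R) : Re (x * (r%:C)%C) = Re x * r.
Proof. case: x => a b /=. ring. Qed.
Lemma ImMr (x : C) (r : R) : Im (x * (r%:C)%C) = Im x * r.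
Proof. case: x => a b /=. ring. Qed.
Lemma ReMl (x : C) (r : R) : Re ((r%:C)%C * x) = r * Re x.
Proof. case: x => a b /=. ring. Qed.
Lemma ImMl (x : C) (r : R) : Im ((r%:C)%C * x) = r * Im x.
Proof. case: x => a b /=. ring. Qed.

Lemma mulmx_diag_entry (F : comNzRingType) m N k0 (A : 'M[F]_(m, N)) (B : 'M[F]_(N, k0)) (d : 'rV[F]_N) i k :
  (A *m diag_mx d *m B) i k = \sum_j A i j * d 0 j * B j k.
Proof. by rewrite mxE; apply: eq_bigr => j _; rewrite mul_mx_diag mxE. Qed.

Lemma real_spectral N (S : 'M[R]_N) : S^T = S ->
  exists (d : 'rV[R]_N) (a b : 'M[R]_N),
  [/\ S = a^T *m diag_mx d *m a + b^T *m diag_mx d *m b,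
      a^T *m a + b^T *m b = 1%:M,
      char_poly S = \prod_(j < N) ('X - (d 0 j)%:P) &
      forall j, exists2 u : 'rV_N, u != 0 & u *m S = d 0 j *: u].
Proof.
move=> Ssym.
pose f := real_complex R.
have rp : forall I (r : seq I) (F : I -> {poly R}), map_poly f (\prod_(i <- r) F i) = \prod_(i <- r) map_poly f (F i) by move=> I r F; rewrite rmorph_prod.
pose Sc := map_mx f S.
have Sc_herm : Sc \is hermsymmx.
  apply: realsym_hermsym.
    apply/is_hermitianmxP; rewrite expr0 scale1r map_mx_id //.
    by rewrite /Sc map_trmx Ssym.
  by apply/mxOverP => i j; rewrite mxE; apply/complex_realP; exists (S i j).
have /orthomx_spectralP HSc := hermitian_normalmx Sc_herm.
set P := spectralmx Sc in HSc; set D := spectral_diag Sc in HSc.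
have Pu : P \in unitmx := spectral_unit Sc.
have Dr : D \is a realmx := hermitian_spectral_diag_real Sc_herm.
have PiP : invmx P = map_mx Num.conj P^T := invmx_unitary (spectral_unitarymx Sc).
pose d := map_mx Re D; pose a := map_mx Re P; pose b := map_mx Im P.
have Dd : forall j, D 0 j = ((d 0 j)%:C)%C.
  move=> j; have /mxOverP/(_ 0 j) := Dr; rewrite mxE => /complex_realP [k ->].
  by [].
have Sik : forall i k, S i k = Re (Sc i k) by move=> i k; rewrite mxE.
exists d, a, b; split.
- apply/matrixP => i k; rewrite Sik HSc mulmx_diag_entry Re_sum [RHS]mxE.
  rewrite !mulmx_diag_entry -big_split /=; apply: eq_bigr => j _.
  rewrite PiP Dd !mxE ReM_conj /=; ring.
- apply/matrixP => i k.
  transitivity (Re ((invmx P *m P) i k)); last first.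
    by rewrite mulVmx // !mxE; case: (i == k).
  rewrite PiP !mxE Re_sum -big_split; apply: eq_bigr => j _ /=.
  rewrite !mxE.
  have := ReM_conj (P j i) (P j k) 1; rewrite mulr1 mul1r => ->; ring.
- apply: (@map_poly_inj _ _ f).
  rewrite map_char_poly -/Sc HSc char_poly_conj; last by rewrite mulVmx.
  rewrite char_poly_trig ?diag_mx_is_trig // rp; apply: eq_bigr => j _.
  by rewrite !mxE eqxx mulr1n map_polyXsubC Dd.
- move=> j.
  have PSc : P *m Sc = diag_mx D *m P by rewrite HSc !mulmxA mulmxV // mul1mx.
  pose u := row j P.
  have uSc : u *m Sc = D 0 j *: u.
    by rewrite -row_mul PSc row_mul row_diag_mx -scalemxAl -rowE.
  have unz : u != 0.
    apply/eqP => u0; have := congr1 (fun M : 'M[C]_N => row j M) (mulmxV Pu).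
    rewrite row_mul -/u u0 mul0mx => /rowP/(_ j); rewrite !mxE eqxx /=.
    by move/eqP; rewrite eq_sym oner_eq0.
  clearbody u; clearbody d.
  have Hre : forall k, \sum_i Re (u 0 i) * S i k = d 0 j * Re (u 0 k).
    move=> k; have := congr1 (fun M : 'rV[C]_N => Re (M 0 k)) uSc.
    rewrite /= !mxE Re_sum Dd ReMl => <-; apply: eq_bigr => i _.
    by rewrite !mxE ReMr.
  have Him : forall k, \sum_i Im (u 0 i) * S i k = d 0 j * Im (u 0 k).
    move=> k; have := congr1 (fun M : 'rV[C]_N => Im (M 0 k)) uSc.
    rewrite /= !mxE Im_sum Dd ImMl => <-; apply: eq_bigr => i _.
    by rewrite !mxE ImMr.
  have [ua0|uanz] := eqVneq (map_mx Re u) 0; last first.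
    exists (map_mx Re u) => //; apply/rowP => k; rewrite !mxE -Hre.
    by apply: eq_bigr => i _; rewrite !mxE.
  exists (map_mx Im u).
    apply: contra unz => /eqP ub0; apply/eqP/rowP => k.
    have := congr1 (fun M : 'rV[R]_N => M 0 k) ua0.
    have := congr1 (fun M : 'rV[R]_N => M 0 k) ub0.
    rewrite !mxE; case: (u 0 k) => x y /= -> ->; by [].
  apply/rowP => k; rewrite !mxE -Him.
  by apply: eq_bigr => i _; rewrite !mxE.
Qed.

Lemma diag_quad N (p d : 'rV[R]_N) :
  (p *m diag_mx d *m p^T) 0 0 = \sum_j d 0 j * p 0 j ^+ 2.
Proof. by rewrite mulmx_diag_entry; apply: eq_bigr => j _; rewrite mxE; ring. Qed.

Lemma rquadE N (p : 'rV[R]_N) : (p *m p^T) 0 0 = \sum_j p 0 j ^+ 2.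
Proof. by rewrite mxE; apply: eq_bigr => j _; rewrite mxE expr2. Qed.

Lemma quad_split N (S a b : 'M[R]_N) (d : 'rV[R]_N) (w : 'rV[R]_N) :
  S = a^T *m diag_mx d *m a + b^T *m diag_mx d *m b ->
  (w *m S *m w^T) 0 0 = \sum_j d 0 j * (w *m a^T) 0 j ^+ 2
                      + \sum_j d 0 j * (w *m b^T) 0 j ^+ 2.
Proof.
move=> ->; rewrite mulmxDr mulmxDl mxE -!diag_quad !trmx_mul !trmxK !mulmxA.
by [].
Qed.

Lemma rayleigh N (S : 'M[R]_N) : (0 < N)%N -> S^T = S ->
  exists lam, exists u : 'rV_N, [/\ u != 0, u *m S = lam *: u &
    forall w : 'rV_N, lam * (w *m w^T) 0 0 <= (w *m S *m w^T) 0 0].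
Proof.
move=> N0 Ssym; have [d [a [b [HS Hab _ Heig]]]] := real_spectral Ssym.
have [j0 _ Hj0] := @arg_minP _ _ 'I_N (Ordinal N0) xpredT (fun j => d 0 j) isT.
have [u unz Hu] := Heig j0.
exists (d 0 j0), u; split => // w.
have Hw : (w *m w^T) 0 0 = (w *m 1%:M *m w^T) 0 0 by rewrite mulmx1.
rewrite Hw -Hab (quad_split w HS).
have -> : a^T *m a + b^T *m b = a^T *m diag_mx (const_mx 1) *m a + b^T *m diag_mx (const_mx 1) *m b.
  by rewrite diag_const_mx !mulmx1.
rewrite (quad_split w (erefl _)) mulrDr !mulr_sumr.
apply: lerD; apply: ler_sum => j _; rewrite mxE mul1r;
  by apply: ler_wpM2r; [exact: sqr_ge0 | exact: Hj0].
Qed.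

Lemma psd_decomp N (S : 'M[R]_N) : S^T = S ->
  (forall w : 'rV_N, 0 <= (w *m S *m w^T) 0 0) ->
  exists (d : 'rV[R]_N) (a b : 'M[R]_N),
  [/\ forall j, 0 <= d 0 j,
      S = a^T *m diag_mx d *m a + b^T *m diag_mx d *m b &
      a^T *m a + b^T *m b = 1%:M].
Proof.
move=> Ssym Spsd; have [d [a [b [HS Hab _ Heig]]]] := real_spectral Ssym.
exists d, a, b; split => // j.
have [u unz Hu] := Heig j.
have := Spsd u; rewrite Hu -scalemxAl mxE.
have : 0 < (u *m u^T) 0 0.
  rewrite rquadE lt_def; apply/andP; split; last first.
    by apply: sumr_ge0 => i _; exact: sqr_ge0.
  apply: contra unz; rewrite psumr_eq0; last by move=> i _; exact: sqr_ge0.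
  move=> /allP H; apply/eqP/matrixP => i k; rewrite ord1 mxE.
  by have := H k (mem_index_enum k); rewrite sqrf_eq0 => /eqP.
by move=> H1 H2; rewrite -(pmulr_lge0 _ H1).
Qed.

Lemma sorted_spec_ex N (S : 'M[R]_N) : S^T = S ->
  exists s, sorted (fun x y : R => y <= x) s /\ char_poly S = \prod_(x <- s) ('X - x%:P).
Proof.
move=> Ssym; have [d [a [b [_ _ Hc _]]]] := real_spectral Ssym.
exists (sort (fun x y : R => y <= x) [seq d 0 j | j <- enum 'I_N]); split.
  by apply: sort_sorted => x y; exact: le_total.
rewrite Hc (perm_big _ (permEl (perm_sort _ _))) big_map big_enum /=.
by [].
Qed.

End Spec.

Section D.
Variable R : realType.

Lemma horner_is_derive0 (P : {poly R}) : is_derive (0:R) (1:R) (horner P) (P`_1).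
Proof.
have := @is_derive_poly R P 0.
by rewrite horner_coef0 coef_deriv mulr1n.
Qed.

Lemma horner_derive1_0 (P : {poly R}) : derive1 (horner P) 0 = P`_1.
Proof.
have H := horner_is_derive0 P. by rewrite derive1E derive_val.
Qed.

Lemma Poly3E (a b c t : R) : (Poly [:: a; b; c]).[t] = a + t * b + t ^+ 2 * c.
Proof. rewrite horner_Poly /=. ring. Qed.

Lemma half_double (x : R) : 2^-1 * (x + x) = x.
Proof. by rewrite -mulr2n -(mulr_natl x 2) mulrA mulVf ?pnatr_eq0 // mul1r. Qed.

Definition inner m (p q : 'cV[R]_m) : R := \sum_i p i 0 * q i 0.

Lemma innerC m (p q : 'cV[R]_m) : inner p q = inner q p.
Proof. by apply: eq_bigr => i _; rewrite mulrC. Qed.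

Lemma norm2sqE m (p : 'cV[R]_m) : norm2sq p = inner p p.
Proof. by apply: eq_bigr => i _; rewrite expr2. Qed.

Lemma inner_poly m (p0 p1 p2 q0 q1 q2 : 'cV[R]_m) :
  exists P : {poly R},
   (forall t, inner (p0 + t *: p1 + t^+2 *: p2) (q0 + t *: q1 + t^+2 *: q2) = P.[t])
   /\ P`_1 = inner p0 q1 + inner p1 q0.
Proof.
exists (\sum_i Poly [:: p0 i 0; p1 i 0; p2 i 0] * Poly [:: q0 i 0; q1 i 0; q2 i 0]).
split.
  move=> t; rewrite horner_sum; apply: eq_bigr => i _.
  by rewrite hornerM !Poly3E !mxE.
rewrite coef_sum /inner -big_split; apply: eq_bigr => i _.
rewrite coefM !big_ord_recr big_ord0 !coef_Poly /= add0r.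
ring.
Qed.

Lemma inner_derive m (p0 p1 p2 q0 q1 q2 : 'cV[R]_m) c :
  is_derive (0:R) (1:R)
    (fun t => c * inner (p0 + t *: p1 + t^+2 *: p2) (q0 + t *: q1 + t^+2 *: q2))
    (c * (inner p0 q1 + inner p1 q0)) /\
  derive1 (fun t => c * inner (p0 + t *: p1 + t^+2 *: p2) (q0 + t *: q1 + t^+2 *: q2)) 0
    = c * (inner p0 q1 + inner p1 q0).
Proof.
have [P [HP H1]] := inner_poly p0 p1 p2 q0 q1 q2.
have -> : (fun t => c * inner (p0 + t *: p1 + t^+2 *: p2) (q0 + t *: q1 + t^+2 *: q2))
   = horner (c *: P).
  by apply/funext => t; rewrite hornerZ HP.
by rewrite -H1 -coefZ; split; [exact: horner_is_derive0 | exact: horner_derive1_0].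
Qed.

Section M.
Variables (n r m : nat) (As : 'I_m -> 'M[R]_n).

Lemma meas_opD M1 M2 : meas_op As (M1 + M2) = meas_op As M1 + meas_op As M2.
Proof.
by apply/matrixP => i j; rewrite !mxE /frob_inner mulmxDr mxtraceD.
Qed.

Lemma meas_opZ c M : meas_op As (c *: M) = c *: meas_op As M.
Proof.
by apply/matrixP => i j; rewrite !mxE /frob_inner -scalemxAr mxtraceZ.
Qed.

Lemma meas_opN M : meas_op As (- M) = - meas_op As M.
Proof. by rewrite -scaleN1r meas_opZ scaleN1r. Qed.

Lemma meas_opB M1 M2 : meas_op As (M1 - M2) = meas_op As M1 - meas_op As M2.
Proof. by rewrite meas_opD meas_opN. Qed.

Lemma meas_op0 : meas_op As 0 = 0.
Proof. by rewrite -(scale0r 0) meas_opZ scale0r. Qed.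

Lemma sq_expand (Y V : 'M[R]_(n, r)) t :
  (Y + t *: V) *m (Y + t *: V)^T
  = Y *m Y^T + t *: (Y *m V^T + V *m Y^T) + t^+2 *: (V *m V^T).
Proof.
rewrite [(Y + _)^T]linearD /=.
rewrite (_ : (t *: V)^T = t *: V^T); last by apply/matrixP => i j; rewrite !mxE.
rewrite mulmxDl !mulmxDr -!scalemxAl -!scalemxAr scalerA -expr2.
rewrite scalerDr !addrA; congr (_ + _); rewrite -!addrA; congr (_ + _).
Qed.

Variable b : 'cV[R]_m.

Lemma meas_expand (Y V : 'M[R]_(n, r)) t :
  meas_op As ((Y + t *: V) *m (Y + t *: V)^T) - b
  = (meas_op As (Y *m Y^T) - b) + t *: meas_op As (Y *m V^T + V *m Y^T)
    + t^+2 *: meas_op As (V *m V^T).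
Proof.
rewrite sq_expand (meas_opD (_ + _)) (meas_opD (Y *m Y^T)) !meas_opZ.
by rewrite -!addrA; congr (_ + _); rewrite addrA [RHS]addrC.
Qed.

Lemma fobj_expand (Y V : 'M[R]_(n, r)) t :
  fobj As b (Y + t *: V) =
  2^-1 * inner ((meas_op As (Y *m Y^T) - b) + t *: meas_op As (Y *m V^T + V *m Y^T)
    + t^+2 *: meas_op As (V *m V^T))
   ((meas_op As (Y *m Y^T) - b) + t *: meas_op As (Y *m V^T + V *m Y^T)
    + t^+2 *: meas_op As (V *m V^T)).
Proof. by rewrite /fobj norm2sqE meas_expand. Qed.

Lemma crit_eq (X : 'M[R]_(n, r)) : first_order_critical (fobj As b) X ->
  forall U, inner (meas_op As (X *m X^T) - b) (meas_op As (X *m U^T + U *m X^T)) = 0.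
Proof.
move=> Hc U; have H := Hc U.
have E : (fun t => fobj As b (X + t *: U)) = (fun t => 2^-1 * inner
    ((meas_op As (X *m X^T) - b) + t *: meas_op As (X *m U^T + U *m X^T)
    + t^+2 *: meas_op As (U *m U^T))
   ((meas_op As (X *m X^T) - b) + t *: meas_op As (X *m U^T + U *m X^T)
    + t^+2 *: meas_op As (U *m U^T))).
  by apply/funext => t; rewrite fobj_expand.
rewrite E in H.
have [H2 _] := inner_derive (meas_op As (X *m X^T) - b) (meas_op As (X *m U^T + U *m X^T))
   (meas_op As (U *m U^T)) (meas_op As (X *m X^T) - b) (meas_op As (X *m U^T + U *m X^T))
   (meas_op As (U *m U^T)) (2^-1).
have := @derive_val _ _ _ _ _ _ _ H; rewrite (@derive_val _ _ _ _ _ _ _ H2) [inner (meas_op _ _) _]innerC.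
move=> /eqP; rewrite half_double.
by move/eqP.
Qed.

Lemma hess_eq (X U V : 'M[R]_(n, r)) :
  hessian (fobj As b) X U V =
  inner (meas_op As (X *m U^T + U *m X^T)) (meas_op As (X *m V^T + V *m X^T))
  + inner (meas_op As (X *m X^T) - b) (meas_op As (U *m V^T + V *m U^T)).
Proof.
rewrite /hessian.
have E1 : forall s, derive1 (fun t => fobj As b (X + s *: U + t *: V)) 0 =
   1 * inner (meas_op As (X *m X^T) - b + s *: meas_op As (X *m U^T + U *m X^T)
        + s^+2 *: meas_op As (U *m U^T))
      (meas_op As (X *m V^T + V *m X^T) + s *: meas_op As (U *m V^T + V *m U^T)
        + s^+2 *: 0).
  move=> s.
  under eq_fun do rewrite fobj_expand.
  have [_ ->] := inner_derive (meas_op As ((X + s *: U) *m (X + s *: U)^T) - b)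
    (meas_op As ((X + s *: U) *m V^T + V *m (X + s *: U)^T)) (meas_op As (V *m V^T))
    (meas_op As ((X + s *: U) *m (X + s *: U)^T) - b)
    (meas_op As ((X + s *: U) *m V^T + V *m (X + s *: U)^T)) (meas_op As (V *m V^T)) (2^-1).
  rewrite [inner (meas_op _ _) _]innerC half_double.
  rewrite meas_expand scaler0 addr0 mul1r; congr (inner _ _).
  rewrite [(X + _)^T]linearD /=.
  rewrite (_ : (s *: U)^T = s *: U^T); last by apply/matrixP => i j; rewrite !mxE.
  rewrite mulmxDl mulmxDr -scalemxAl -scalemxAr.
  rewrite !meas_opD !meas_opZ scalerDr -!addrA; congr (_ + _).
  by rewrite addrCA.
under eq_fun do rewrite E1.
have [_ ->] := inner_derive (meas_op As (X *m X^T) - b) (meas_op As (X *m U^T + U *m X^T))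
    (meas_op As (U *m U^T)) (meas_op As (X *m V^T + V *m X^T))
    (meas_op As (U *m V^T + V *m U^T)) 0 1.
by rewrite mul1r addrC.
Qed.


Lemma trZ p q (c : R) (A : 'M[R]_(p, q)) : (c *: A)^T = c *: A^T.
Proof. by apply/matrixP => i j; rewrite !mxE. Qed.
Lemma trD p q (A B : 'M[R]_(p, q)) : (A + B)^T = A^T + B^T.
Proof. by apply/matrixP => i j; rewrite !mxE. Qed.

Lemma innerDl k (p1 p2 q : 'cV[R]_k) : inner (p1 + p2) q = inner p1 q + inner p2 q.
Proof. by rewrite /inner -big_split; apply: eq_bigr => i _; rewrite mxE mulrDl. Qed.
Lemma innerZl k c (p q : 'cV[R]_k) : inner (c *: p) q = c * inner p q.
Proof. by rewrite /inner mulr_sumr; apply: eq_bigr => i _; rewrite mxE mulrA. Qed.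
Lemma innerDr k (p q1 q2 : 'cV[R]_k) : inner p (q1 + q2) = inner p q1 + inner p q2.
Proof. by rewrite innerC innerDl !(innerC p). Qed.
Lemma innerZr k c (p q : 'cV[R]_k) : inner p (c *: q) = c * inner p q.
Proof. by rewrite innerC innerZl innerC. Qed.

Lemma hess_lin1 (X U1 U2 V : 'M[R]_(n, r)) c :
  hessian (fobj As b) X (U1 + c *: U2) V =
  hessian (fobj As b) X U1 V + c * hessian (fobj As b) X U2 V.
Proof.
rewrite !hess_eq trD trZ mulmxDr mulmxDl -scalemxAr -scalemxAl.
rewrite mulmxDl mulmxDr -scalemxAl -scalemxAr.
have -> : X *m U1^T + c *: (X *m U2^T) + (U1 *m X^T + c *: (U2 *m X^T)) =
  (X *m U1^T + U1 *m X^T) + c *: (X *m U2^T + U2 *m X^T).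
  by rewrite scalerDr -!addrA; congr (_ + _); rewrite addrCA.
have -> : U1 *m V^T + c *: (U2 *m V^T) + (V *m U1^T + c *: (V *m U2^T)) =
  (U1 *m V^T + V *m U1^T) + c *: (U2 *m V^T + V *m U2^T).
  by rewrite scalerDr -!addrA; congr (_ + _); rewrite addrCA.
set A1 := X *m U1^T + U1 *m X^T; set A2 := X *m U2^T + U2 *m X^T.
set B1 := U1 *m V^T + V *m U1^T; set B2 := U2 *m V^T + V *m U2^T.
set Q := meas_op As (X *m V^T + V *m X^T); set E := meas_op As (X *m X^T) - b.
rewrite (meas_opD A1) (meas_opD B1) !meas_opZ innerDl innerZl !innerDr !innerZr.
ring.
Qed.

Lemma hess_sym (X U V : 'M[R]_(n, r)) :
  hessian (fobj As b) X U V = hessian (fobj As b) X V U.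
Proof. by rewrite !hess_eq innerC [U *m V^T + _]addrC. Qed.

End M.
End D.

Section V.
Variable R : realType.
Variables (n r m : nat) (As : 'I_m -> 'M[R]_n) (b : 'cV[R]_m).

Lemma frob_inner_vec (U V : 'M[R]_(n, r)) :
  frob_inner U V = (mxvec U *m (mxvec V)^T) 0 0.
Proof.
rewrite /frob_inner /mxtrace mxE (reindex _ (curry_mxvec_bij _ _)) /=.
transitivity (\sum_(i < n) \sum_(j < r) U i j * V i j).
  rewrite exchange_big; apply: eq_bigr => j _; rewrite mxE; apply: eq_bigr => i _.
  by rewrite !mxE.
by rewrite pair_bigA; apply: eq_bigr => [[i j]] _ /=; rewrite !mxE !mxvecE.
Qed.

Lemma vec_expand (h : 'M[R]_(n, r) -> R)
  (hlin : forall x y c, h (x + c *: y) = h x + c * h y) U :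
  h U = \sum_k mxvec U 0 k * h (vec_mx (delta_mx 0 k)).
Proof.
have EU : U = \sum_k mxvec U 0 k *: vec_mx (delta_mx 0 k).
  apply: (can_inj mxvecK); rewrite linear_sum /=.
  rewrite {1}[mxvec U]matrix_sum_delta big_ord1; apply: eq_bigr => k _.
  by rewrite linearZ /= vec_mxK.
by rewrite {1}EU lin_sum.
Qed.


Definition Hmat (X : 'M[R]_(n, r)) : 'M[R]_(n * r) :=
  \matrix_(i, j) hessian (fobj As b) X (vec_mx (delta_mx 0 i)) (vec_mx (delta_mx 0 j)).

Lemma hess_mat X U V :
  hessian (fobj As b) X U V = (mxvec U *m Hmat X *m (mxvec V)^T) 0 0.
Proof.
have L1 : forall V x y c, hessian (fobj As b) X (x + c *: y) V =
    hessian (fobj As b) X x V + c * hessian (fobj As b) X y V.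
  by move=> V' x y c; rewrite hess_lin1.
rewrite (@vec_expand (fun U => hessian (fobj As b) X U V) (L1 V) U).
rewrite -mulmxA mxE; apply: eq_bigr => k _; congr (_ * _).
rewrite hess_sym (@vec_expand (fun V => hessian (fobj As b) X V _) (L1 _) V).
rewrite mxE; apply: eq_bigr => l _; rewrite !mxE hess_sym; ring.
Qed.

Lemma hess_eig X : (0 < n * r)%N ->
  exists lam, exists U0 : 'M[R]_(n, r), [/\ U0 != 0,
    forall V, hessian (fobj As b) X U0 V = lam * frob_inner U0 V &
    forall W, lam * frob_norm2 W <= hessian (fobj As b) X W W].
Proof.
move=> N0.
have Hs : (Hmat X)^T = Hmat X.
  by apply/matrixP => i j; rewrite !mxE hess_sym.
have [lam [u [unz Hu Hw]]] := rayleigh N0 Hs.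
exists lam, (vec_mx u); split.
- by apply: contra unz => /eqP H; rewrite -[u]vec_mxK H linear0.
- by move=> V; rewrite hess_mat frob_inner_vec vec_mxK Hu -scalemxAl mxE.
- by move=> W; rewrite hess_mat /frob_norm2 frob_inner_vec.
Qed.

End V.

Lemma sing_val_eig (R : realType) n r (X : 'M[R]_(n, r)) : (0 < r)%N ->
  exists2 v : 'rV[R]_r, v != 0 & v *m (X^T *m X) = (sing_val r X ^+ 2) *: v.
Proof.
move=> r0.
have Ssym : (X^T *m X)^T = X^T *m X by rewrite trmx_mul trmxK.
have [s0 Hs0] := sorted_spec_ex Ssym.
have [_ Hcp] : sorted_spectrum (X^T *m X) (sing_vals_sq X).
  by apply: epsilon_spec; exists s0.
set s := sing_vals_sq X in Hcp *.
have Hsz : size s = r.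
  have := size_char_poly (X^T *m X); rewrite Hcp size_prod_XsubC.
  by case.
set mu := nth 0 s r.-1.
have mus : mu \in s by rewrite mem_nth // Hsz prednK.
have : eigenvalue (X^T *m X) mu.
  by rewrite eigenvalue_root_char Hcp root_prod_XsubC.
move=> /eigenvalueP [v Hv vnz].
have mu0 : 0 <= mu.
  have H1 := rnorm_gt0 vnz.
  have H2 : 0 <= (v *m (X^T *m X) *m v^T) 0 0.
    have -> : v *m (X^T *m X) *m v^T = (X *m v^T)^T *m (X *m v^T).
      by rewrite trmx_mul trmxK !mulmxA.
    exact: cnorm_ge0.
  move: H2; rewrite Hv -scalemxAl mxE.
  by move=> H2; rewrite -(pmulr_lge0 _ H1).
exists v => //; rewrite /sing_val -/s -/mu sqr_sqrtr //.
Qed.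

Section F.
Variable R : realType.

Lemma frob_norm2_vec p q (U : 'M[R]_(p, q)) :
  frob_norm2 U = \sum_k mxvec U 0 k ^+ 2.
Proof. by rewrite /frob_norm2 frob_inner_vec rquadE. Qed.

Lemma frob_norm2_ge0 p q (U : 'M[R]_(p, q)) : 0 <= frob_norm2 U.
Proof. by rewrite frob_norm2_vec; apply: sumr_ge0 => k _; exact: sqr_ge0. Qed.

Lemma frob_norm2_gt0 p q (U : 'M[R]_(p, q)) : U != 0 -> 0 < frob_norm2 U.
Proof.
move=> Unz; rewrite /frob_norm2 frob_inner_vec rnorm_gt0 //.
by apply: contra Unz => /eqP H; rewrite -[U]mxvecK H linear0.
Qed.

Lemma frob_add_le p q (P Q : 'M[R]_(p, q)) :
  frob_norm2 (P + Q) <= 2 * (frob_norm2 P + frob_norm2 Q).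
Proof.
rewrite !frob_norm2_vec -big_split mulr_sumr; apply: ler_sum => k _.
rewrite linearD /= mxE.
have := sqr_ge0 (mxvec P 0 k - mxvec Q 0 k); lra.
Qed.

Lemma frob_rank1 p q (x : 'cV[R]_p) (z : 'cV[R]_q) :
  frob_norm2 (x *m z^T) = (x^T *m x) 0 0 * (z^T *m z) 0 0.
Proof.
rewrite /frob_norm2 /frob_inner trmx_mul trmxK !mulmxA -[z *m x^T *m x]mulmxA.
rewrite [x^T *m x]mx11_scalar mul_mx_scalar -scalemxAl mxtraceZ.
rewrite mxtrace_mulC tr11.
by rewrite [in RHS]mxE eqxx mulr1n.
Qed.

End F.

Section Ar.
Variable R : realFieldType.
Lemma ar1 (lam c dj A1 B1 eA eB : R) : 0 <= dj ->
  lam * A1 <= c * A1 + 2 * eA -> lam * B1 <= c * B1 + 2 * eB ->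
  lam * (dj * (A1 + B1)) <= c * (dj * (A1 + B1)) + 2 * (dj * (eA + eB)).
Proof.
move=> H K1 K2; have := ler_wpM2l H (lerD K1 K2).
have -> : dj * (lam * A1 + lam * B1) = lam * (dj * (A1 + B1)) by ring.
have -> : dj * (c * A1 + 2 * eA + (c * B1 + 2 * eB)) =
  c * (dj * (A1 + B1)) + 2 * (dj * (eA + eB)) by ring.
by [].
Qed.
Lemma ar2 (lT cT nE dF : R) : lT <= cT + 2 * - nE -> dF <= nE -> lT <= cT - 2 * dF.
Proof. move=> H1 H2; lra. Qed.
Lemma ar3 (lam q G : R) : lam <= 2 * q - 2 * G -> q < G -> lam < 0 /\ lam <= q - G.
Proof. move=> H1 H2; split; lra. Qed.
Lemma ar5 (x : R) : 2 * (x + x) <= 2 * (2 * x).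
Proof. rewrite (_ : x + x = 2 * x) //; ring. Qed.
End Ar.

Unset Implicit Arguments.

Theorem theorem1 (R : realType) (n r rs m : nat)
  (As : 'I_m -> 'M[R]_n) (Ms : 'M[R]_n) (delta : R) (Xh : 'M[R]_(n, r)) :
  (1 <= rs)%N -> (rs <= r)%N -> (r <= n)%N ->
  (forall i, sym_matrix (As i)) ->
  psd Ms -> Ms != 0 -> \rank Ms = rs ->
  0 <= delta -> delta < 1 ->
  RIP As (r + rs) delta ->
  first_order_critical (fobj As (meas_op As Ms)) Xh ->
  frob_norm2 (Xh *m Xh^T - Ms) >
    2 * ((1 + delta) / (1 - delta)) * \tr Ms * (sing_val r Xh) ^+ 2 ->
  ~ second_order_critical (fobj As (meas_op As Ms)) Xh /\
  strict_saddle (fobj As (meas_op As Ms)) Xh /\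
  exists lam : R,
    hessian_eigenvalue (fobj As (meas_op As Ms)) Xh lam /\ lam < 0 /\
    lam <= 2 * (1 + delta) * (sing_val r Xh) ^+ 2
           - (1 - delta) * frob_norm2 (Xh *m Xh^T - Ms) / \tr Ms.
Proof.
move=> hrs1 hrsr hrn Asym [Msym Mpsd] Mnz Mrank d0 d1 RIPh crit Hgap.
set b := meas_op As Ms in crit *.
have r0 : (0 < r)%N by apply: leq_trans hrs1 hrsr.
have nr0 : (0 < n * r)%N by rewrite muln_gt0 r0 (leq_trans r0 hrn).
have [lam [U0 [U0nz U0eig Hlam]]] := hess_eig As b Xh nr0.
have [v vnz Hv] := sing_val_eig Xh r0.
set mu := sing_val r Xh ^+ 2 in Hv Hgap *.
set F := frob_norm2 (Xh *m Xh^T - Ms) in Hgap *.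
set T := \tr Ms in Hgap *.
set E := meas_op As (Xh *m Xh^T) - b.
have critU := crit_eq crit.
pose ell := fun Y => inner E (meas_op As Y).
have ell_lin : forall x y c, ell (x + c *: y) = ell x + c * ell y.
  by move=> x y c; rewrite /ell meas_opD meas_opZ innerDr innerZr.
have ellX : ell (Xh *m Xh^T) = 0.
  have := critU Xh; rewrite meas_opD innerDr -/(ell (Xh *m Xh^T)) => H.
  by rewrite -(half_double (ell (Xh *m Xh^T))) H mulr0.
have EE : E = meas_op As (Xh *m Xh^T - Ms) by rewrite meas_opB.
have ellM : ell Ms = - norm2sq E.
  have -> : Ms = Xh *m Xh^T + (-1) *: (Xh *m Xh^T - Ms).
    by rewrite scaleN1r opprB addrC subrK.
  by rewrite ell_lin ellX add0r mulN1r /ell -EE norm2sqE.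
have rip_le : forall Y : 'M[R]_n, (\rank Y <= r + rs)%N ->
    norm2sq (meas_op As Y) <= (1 + delta) * frob_norm2 Y.
  by move=> Y HY; have [] := RIPh Y HY.
have RIP_E : (1 - delta) * F <= norm2sq E.
  rewrite EE; have [] // := RIPh (Xh *m Xh^T - Ms).
  apply: leq_trans (mxrank_add _ _) _; rewrite mxrank_opp Mrank leq_add2r.
  exact: leq_trans (mxrankM_maxl _ _) (rank_leq_col _).
pose nu := (v *m v^T) 0 0.
have nu0 : 0 < nu by exact: rnorm_gt0.
pose c := 4 * (1 + delta) * mu.
have Kz : forall z : 'cV[R]_n,
    lam * (z^T *m z) 0 0 <= c * (z^T *m z) 0 0 + 2 * ell (z *m z^T).
  move=> z.
  pose x := Xh *m v^T.
  have Hx : (x^T *m x) 0 0 = mu * nu.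
    rewrite /x trmx_mul trmxK mulmxA -[v *m Xh^T *m Xh]mulmxA Hv -scalemxAl mxE.
    by [].
  have HW := Hlam (z *m v).
  have fW : frob_norm2 (z *m v) = (z^T *m z) 0 0 * nu.
    by rewrite -[v]trmxK frob_rank1 trmxK.
  have XW : Xh *m (z *m v)^T = x *m z^T by rewrite trmx_mul mulmxA.
  have WX : z *m v *m Xh^T = z *m x^T by rewrite /x trmx_mul trmxK mulmxA.
  have WW : z *m v *m (z *m v)^T = nu *: (z *m z^T).
    rewrite trmx_mul mulmxA -[z *m v *m v^T]mulmxA [v *m v^T]mx11_scalar.
    by rewrite mul_mx_scalar -scalemxAl.
  move: HW; rewrite hess_eq XW WX WW fW -norm2sqE.
  rewrite -/E (meas_opD As (nu *: (z *m z^T))) !(meas_opZ As nu) innerDr innerZr -/(ell (z *m z^T)).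
  have H1 : norm2sq (meas_op As (x *m z^T + z *m x^T)) <=
      (1 + delta) * (2 * (2 * ((x^T *m x) 0 0 * (z^T *m z) 0 0))).
    apply: le_trans (rip_le _ _) _.
      apply: leq_trans (mxrank_add _ _) _.
      apply: leq_trans (leq_add (leq_trans (mxrankM_maxl _ _) (rank_leq_col _))
                                (leq_trans (mxrankM_maxl _ _) (rank_leq_col _))) _.
      by apply: leq_add.
    apply: ler_wpM2l; first by apply: addr_ge0 => //; exact: ler01.
    apply: le_trans (frob_add_le _ _) _.
    rewrite !frob_rank1 [(z^T *m z) 0 0 * _]mulrC.
    exact: ar5.
  rewrite Hx in H1.
  move=> H2.
  have H3 : lam * (z^T *m z) 0 0 * nu <= (c * (z^T *m z) 0 0 + 2 * ell (z *m z^T)) * nu.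
    rewrite /c; move: H1 H2; set zz := (z^T *m z) 0 0; set el := ell (z *m z^T).
    set nn := norm2sq _. move=> H1 H2.
    have -> : (4 * (1 + delta) * mu * zz + 2 * el) * nu =
       (1 + delta) * (2 * (2 * (mu * nu * zz))) + (nu * el + nu * el) by ring.
    have -> : lam * zz * nu = lam * (zz * nu) by ring.
    apply: le_trans H2 _; apply: lerD => //.
  by rewrite -(ler_pM2r nu0).
have Mpsd' : forall w : 'rV[R]_n, 0 <= (w *m Ms *m w^T) 0 0.
  by move=> w; have := Mpsd w^T; rewrite trmxK.
have [d [a [b' [Hd HMs Hab]]]] := psd_decomp Msym Mpsd'.
pose al := fun j => (row j a)^T.
pose be := fun j => (row j b')^T.
have Msum : Ms = \sum_j d 0 j *: (al j *m (al j)^T + be j *m (be j)^T).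
  rewrite {1}HMs; apply/matrixP => i k.
  rewrite summxE [LHS]mxE !mulmx_diag_entry -big_split; apply: eq_bigr => j _ /=.
  rewrite !mxE !big_ord1 !mxE; ring.
have trlin : forall (x y : 'M[R]_n) c0, \tr (x + c0 *: y) = \tr x + c0 * \tr y.
  by move=> x y c0; rewrite mxtraceD mxtraceZ.
have HT : T = \sum_j d 0 j * (((al j)^T *m al j) 0 0 + ((be j)^T *m be j) 0 0).
  rewrite /T {1}Msum (@lin_sum _ _ (@mxtrace R n) trlin); apply: eq_bigr => j _.
  by rewrite mxtraceD (mxtrace_mulC (al j)) (mxtrace_mulC (be j)) !tr11.
have Hell : ell Ms = \sum_j d 0 j * (ell (al j *m (al j)^T) + ell (be j *m (be j)^T)).
  rewrite {1}Msum (@lin_sum _ _ ell ell_lin); apply: eq_bigr => j _.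
  by have := ell_lin (al j *m (al j)^T) (be j *m (be j)^T) 1; rewrite scale1r mul1r => ->.
have Hsum : lam * T <= c * T + 2 * ell Ms.
  rewrite HT Hell !mulr_sumr -big_split; apply: ler_sum => j _ /=.
  have K1 := Kz (al j); have K2 := Kz (be j); have := Hd j.
  move: K1 K2; set A1 := ((al j)^T *m al j) 0 0; set B1 := ((be j)^T *m be j) 0 0.
  by move=> K1 K2 Hdj; apply: ar1.
have Tge : 0 <= T.
  rewrite HT; apply: sumr_ge0 => j _; apply: mulr_ge0 => //.
  by apply: addr_ge0; apply: cnorm_ge0.
have T0 : 0 < T.
  rewrite lt_def Tge andbT; apply: contra Mnz => /eqP T0.
  move: T0; rewrite HT => /eqP; rewrite psumr_eq0; last first.
    by move=> j _; apply: mulr_ge0 => //; apply: addr_ge0; apply: cnorm_ge0.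
  move=> /allP H; apply/eqP; rewrite Msum; apply: big1 => j _.
  have := H j (mem_index_enum j); rewrite mulf_eq0 => /orP [/eqP -> | ].
    by rewrite scale0r.
  rewrite paddr_eq0 ?cnorm_ge0 // => /andP [/eqP A0 /eqP B0].
  by rewrite (cnorm_eq0 A0) (cnorm_eq0 B0) !mul0mx addr0 scaler0.
have Hmain : lam * T <= c * T - 2 * ((1 - delta) * F).
  by rewrite ellM in Hsum; apply: ar2 Hsum RIP_E.
have Tn : T != 0 by rewrite gt_eqF.
have hl : lam <= 2 * (2 * (1 + delta) * mu) - 2 * ((1 - delta) * F / T).
  rewrite -(ler_pM2r T0).
  have -> : (2 * (2 * (1 + delta) * mu) - 2 * ((1 - delta) * F / T)) * T =
            c * T - 2 * ((1 - delta) * F) by rewrite /c; field.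
  exact: Hmain.
have hG : 2 * (1 + delta) * mu < (1 - delta) * F / T.
  rewrite ltr_pdivlMr //.
  have d1' : 0 < 1 - delta by rewrite subr_gt0.
  have := Hgap; rewrite -(ltr_pM2l d1').
  have -> : (1 - delta) * (2 * ((1 + delta) / (1 - delta)) * T * mu) =
            2 * (1 + delta) * mu * T.
    by field; rewrite gt_eqF.
  by [].
move: hl hG; set q := 2 * (1 + delta) * mu; set G := (1 - delta) * F / T => hl hG.
have [lneg lle] := ar3 hl hG.
split.
  move=> [_ H2]; have := H2 U0; rewrite U0eig.
  have := frob_norm2_gt0 U0nz; rewrite /frob_norm2 => Hf.
  by rewrite pmulr_lge0 // leNgt lneg.
split.
  split => //; exists lam; split => //.
  by exists U0.
exists lam; split; first by exists U0.
split => //.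
Qed.
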